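(* Let $M,\widetilde M\in B$ with $M\le'\widetilde M$. Then there exist a strictly increasing map $\varphi\colon\mathbb{N}\to\mathbb{N}$, a monomial $N\in B_1$ and a monomial $P=z_{t_1}\cdots z_{t_k}$ ($k\ge0$) in the odd variables such that $N\,\widetilde\varphi(M)\,P\equiv\widetilde M\pmod I$.
   Context: Let $D$ be an infinite commutative unital integral domain; $Y=\{y_1,y_2,\dots\}$ (even) and $Z=\{z_1,z_2,\dots\}$ (odd) disjoint sets of variables, $X=Y\cup Z$, $D\langle X\rangle$ the free unital associative $D$-algebra, $L\langle X\rangle$ its Lie subalgebra (bracket $[a,b]=ab-ba$) generated by $X$ with induced grading. An ideal of weak graded identities is a two-sided ideal of $D\langle X\rangle$ closed under all endomorphisms mapping each $y_i$ into $L\langle X\rangle^{(0)}$ and each $z_i$ into $L\langle X\rangle^{(1)}$; $I$ is the smallest such ideal containing $y_1y_2-y_2y_1$, $z_1z_2z_3-z_3z_2z_1$, $y_1z_1+z_1y_1$. $B$ is the set of monomials $y_{a_1}\cdots y_{a_k}$ ($k\ge0$, $a_1\le\dots\le a_k$) — forming $B_1$ — and $y_{a_1}\cdots y_{a_k}z_{c_1}z_{d_1}z_{c_2}z_{d_2}\cdots z_{c_m}z_{d_m}$ or the same word with the final $z_{d_m}$ omitted, where $m\ge1$, $a$'s, $c$'s and present $d$'s nondecreasing — forming $B_2$. Sequences: $V(Q_1)$ is the set of sequences $(s_i)_{i\ge1}$ in $\mathbb{N}_0$ with finitely many nonzero terms; triples of such sequences are identified with sequences $(w_i)_{i\ge1}$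 in $\mathbb{N}_0^3$. Define $\xi(y_{a_1}\cdots y_{a_k})=u^{(1)}$ and $\xi(y_{a_1}\cdots y_{a_k}z_{c_1}z_{d_1}\cdots)=(u^{(1)},u^{(2)},u^{(3)})$, where $u^{(1)}_i=\#\{j:a_j=i\}$, $u^{(2)}_i=\#\{j:c_j=i\}$, $u^{(3)}_i=\#\{j:d_j=i\}$. For sequences $u=(u_i),v=(v_i)$ in $\mathbb{N}_0^n$ write $u\le_s v$ iff there is a strictly increasing $\psi\colon\mathbb{N}\to\mathbb{N}$ with $u_i\le v_{\psi(i)}$ componentwise for all $i$. For $M,\widetilde M\in B$, $M\le'\widetilde M$ iff $M,\widetilde M$ lie both in $B_1$ or both in $B_2$ and $\xi(M)\le_s\xi(\widetilde M)$. For strictly increasing $\varphi$, $\widetilde\varphi$ is the substitution $y_i\mapsto y_{\varphi(i)}$, $z_i\mapsto z_{\varphi(i)}$. *)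

(* Defs.v *)
From HB Require Import structures.
From mathcomp Require Import all_boot all_order all_algebra.
Set Implicit Arguments. Unset Strict Implicit. Unset Printing Implicit Defensive.
Import Order.TTheory GRing.Theory Num.Theory.
Local Open Scope ring_scope.

(* Variables: (false, i) is the even variable y_(i+1), (true, i) is the odd
   variable z_(i+1).  Indices are shifted to start at 0. *)
Definition var := (bool * nat)%type.
Definition yv (i : nat) : var := (false, i).
Definition zv (i : nat) : var := (true, i).
Definition word := seq var.

(* Elements of the free unital associative algebra D<X>, represented as
   formal D-linear combinations of words; equality in D<X> is [peq]. *)
Definition poly (D : idomainType) := seq (D * word)%type.

Definition coef (D : idomainType) (p : poly D) (w : word) : D :=
  \sum_(t <- p | t.2 == w) t.1.
Definition peq (D : idomainType) (p q : poly D) : Prop :=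
  forall w, coef p w = coef q w.

Definition mono (D : idomainType) (w : word) : poly D := [:: (1, w)].
Definition onep (D : idomainType) : poly D := mono D [::].
Definition addp (D : idomainType) (p q : poly D) : poly D := p ++ q.
Definition scalep (D : idomainType) (c : D) (p : poly D) : poly D :=
  [seq (c * t.1, t.2) | t <- p].
Definition subp (D : idomainType) (p q : poly D) : poly D :=
  addp p (scalep (-1) q).
Definition mulp (D : idomainType) (p q : poly D) : poly D :=
  [seq (t.1 * s.1, t.2 ++ s.2) | t <- p, s <- q].
Definition bracket (D : idomainType) (p q : poly D) : poly D :=
  subp (mulp p q) (mulp q p).

Definition eval_word (D : idomainType) (sigma : var -> poly D) (w : word) : poly D :=
  foldr (fun v acc => mulp (sigma v) acc) (onep D) w.
Definition substp (D : idomainType) (sigma : var -> poly D) (p : poly D) : poly D :=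
  flatten [seq scalep t.1 (eval_word sigma t.2) | t <- p].

Definition wparity (w : word) : bool := odd (count (fun v : var => v.1) w).

Inductive lie (D : idomainType) : poly D -> Prop :=
| lie_var : forall v, lie (mono D [:: v])
| lie_zero : lie [::]
| lie_add : forall p q, lie p -> lie q -> lie (addp p q)
| lie_scale : forall c p, lie p -> lie (scalep c p)
| lie_bracket : forall p q, lie p -> lie q -> lie (bracket p q)
| lie_equiv : forall p q, peq p q -> lie p -> lie q.

Definition lieg (D : idomainType) (d : bool) (p : poly D) : Prop :=
  lie p /\ forall w, coef p w != 0 -> wparity w = d.

Definition admissible (D : idomainType) (sigma : var -> poly D) : Prop :=
  forall i, lieg false (sigma (yv i)) /\ lieg true (sigma (zv i)).

Inductive inI (D : idomainType) : poly D -> Prop :=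
| I_gen1 : inI (subp (mono D [:: yv 0; yv 1]) (mono D [:: yv 1; yv 0]))
| I_gen2 : inI (subp (mono D [:: zv 0; zv 1; zv 2]) (mono D [:: zv 2; zv 1; zv 0]))
| I_gen3 : inI (addp (mono D [:: yv 0; zv 0]) (mono D [:: zv 0; yv 0]))
| I_add : forall p q, inI p -> inI q -> inI (addp p q)
| I_mull : forall a p, inI p -> inI (mulp a p)
| I_mulr : forall a p, inI p -> inI (mulp p a)
| I_equiv : forall p q, peq p q -> inI p -> inI q
| I_subst : forall sigma p, admissible sigma -> inI p -> inI (substp sigma p).

Definition ys (w : word) : seq nat := [seq v.2 | v <- w & ~~ v.1].
Definition zs (w : word) : seq nat := [seq v.2 | v <- w & v.1].
Definition evens (s : seq nat) : seq nat := mkseq (fun k => nth 0%N s k.*2) (uphalf (size s)).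
Definition odds (s : seq nat) : seq nat := mkseq (fun k => nth 0%N s k.*2.+1) (size s)./2.

Definition inB1 (w : word) : bool := all (fun v : var => ~~ v.1) w && sorted leq (ys w).
Definition inB2 (w : word) : bool :=
  [&& w == [seq yv i | i <- ys w] ++ [seq zv i | i <- zs w],
      sorted leq (ys w), zs w != [::],
      sorted leq (evens (zs w)) & sorted leq (odds (zs w))].
Definition inB (w : word) : bool := inB1 w || inB2 w.

Definition xi1 (w : word) (i : nat) : nat := count (pred1 i) (ys w).
Definition xi2 (w : word) (i : nat) : nat := count (pred1 i) (evens (zs w)).
Definition xi3 (w : word) (i : nat) : nat := count (pred1 i) (odds (zs w)).

Definition strict_incr (f : nat -> nat) : Prop := forall i j, (i < j)%N -> (f i < f j)%N.

Definition le_s1 (u v : nat -> nat) : Prop :=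
  exists psi, strict_incr psi /\ forall i, (u i <= v (psi i))%N.
Definition le_s3 (u1 u2 u3 v1 v2 v3 : nat -> nat) : Prop :=
  exists psi, strict_incr psi /\
    forall i, [/\ (u1 i <= v1 (psi i))%N, (u2 i <= v2 (psi i))%N & (u3 i <= v3 (psi i))%N].

Definition le' (M M' : word) : Prop :=
  (inB1 M /\ inB1 M' /\ le_s1 (xi1 M) (xi1 M')) \/
  (inB2 M /\ inB2 M' /\ le_s3 (xi1 M) (xi2 M) (xi3 M) (xi1 M') (xi2 M') (xi3 M')).

Definition ren (D : idomainType) (phi : nat -> nat) (v : var) : poly D :=
  mono D [:: (v.1, phi v.2)].

Definition infinite_type (D : idomainType) : Prop :=
  forall s : seq D, exists x, x \notin s.

(* Main.v *)
Require Import Defs.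
From mathcomp Require Import all_boot all_order all_algebra.

Import GRing.Theory.

Section Alg.
Variable D : idomainType.

Definition eqv (w1 w2 : word) := inI (subp (mono D w1) (mono D w2)).

Lemma coef_cat (p q : Defs.poly D) w : coef (p ++ q) w = (coef p w + coef q w)%R.
Proof. by rewrite /coef big_cat. Qed.

Lemma coef_scale c (p : Defs.poly D) w : coef (scalep c p) w = (c * coef p w)%R.
Proof. by rewrite /coef /scalep big_map /= big_distrr. Qed.

Lemma mulp_mono u v : mulp (mono D u) (mono D v) = mono D (u ++ v).
Proof. by rewrite /mulp /mono /= mulr1. Qed.

Lemma inI_nil : inI ([::] : Defs.poly D).
Proof. exact: (I_mull [::] (@I_gen1 D)). Qed.

Lemma mulp_scal c (p : Defs.poly D) : mulp [:: (c, [::])] p = scalep c p.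
Proof. by rewrite /mulp /= cats0. Qed.

Lemma eqv_refl w : eqv w w.
Proof.
apply: (I_equiv _ inI_nil) => w'.
by rewrite /subp /addp coef_cat coef_scale /coef big_nil mulN1r addrN.
Qed.

Lemma eqv_sym a b : eqv a b -> eqv b a.
Proof.
move=> H; have := I_mull [:: ((-1)%R, [::])] H; rewrite mulp_scal => H2.
apply: (I_equiv _ H2) => w.
rewrite /subp /addp !coef_cat !coef_scale coef_cat coef_scale.
by rewrite !mulN1r opprD opprK addrC.
Qed.

Lemma eqv_trans a b c : eqv a b -> eqv b c -> eqv a c.
Proof.
move=> H1 H2; have := I_add H1 H2 => H.
apply: (I_equiv _ H) => w.
rewrite /subp /addp !coef_cat !coef_scale !mulN1r.
by rewrite addrA -(addrA (coef _ w)) addNr addr0.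
Qed.

Lemma eqv_ctx u v a b : eqv a b -> eqv (u ++ a ++ v) (u ++ b ++ v).
Proof.
move=> H; have := I_mull (mono D u) (I_mulr (mono D v) H).
by rewrite /eqv /subp /addp /scalep /mulp /mono /= !mul1r !mulr1.
Qed.

Lemma eqv_cat a a' b b' : eqv a a' -> eqv b b' -> eqv (a ++ b) (a' ++ b').
Proof.
move=> H1 H2; apply: (@eqv_trans _ (a' ++ b)).
  by have := @eqv_ctx [::] b _ _ H1.
by have := @eqv_ctx a' [::] _ _ H2; rewrite !cats0.
Qed.

Definition renw (phi : nat -> nat) (w : word) : word := [seq (v.1, phi v.2) | v <- w].

Lemma eval_ren phi w : eval_word (ren D phi) w = mono D (renw phi w).
Proof. by elim: w => //= v w ->; rewrite /ren mulp_mono. Qed.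

Lemma substp_mono phi w : substp (ren D phi) (mono D w) = mono D (renw phi w).
Proof. by rewrite /substp /= eval_ren /scalep /mono /= mulr1. Qed.

Lemma substp_sub phi w1 w2 :
  substp (ren D phi) (subp (mono D w1) (mono D w2)) = subp (mono D (renw phi w1)) (mono D (renw phi w2)).
Proof. by rewrite /substp /subp /addp /scalep /= !eval_ren /mono /= !mulr1. Qed.

Lemma ren_adm phi : admissible (ren D phi).
Proof.
move=> i; split; (split; [exact: lie_var|]) => w;
  rewrite /coef /ren /mono /= big_cons big_nil;
  by rewrite /=; case: ifP => [/eqP <- //|]; rewrite eqxx.
Qed.

Lemma eqv_y a b : eqv [:: yv a; yv b] [:: yv b; yv a].
Proof.
have := I_subst (ren_adm (fun i => nth 0%N [:: a; b] i)) (@I_gen1 D).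
by rewrite substp_sub.
Qed.

Lemma eqv_z a b c : eqv [:: zv a; zv b; zv c] [:: zv c; zv b; zv a].
Proof.
have := I_subst (ren_adm (fun i => nth 0%N [:: a; b; c] i)) (@I_gen2 D).
by rewrite substp_sub.
Qed.
End Alg.


Lemma evens0 : evens [::] = [::]. Proof. by []. Qed.
Lemma odds0 : odds [::] = [::]. Proof. by []. Qed.
Lemma oddsC x s : odds (x :: s) = evens s. Proof. by []. Qed.
Lemma evensC x s : evens (x :: s) = x :: odds s.
Proof.
rewrite /evens /odds /mkseq /=; congr (_ :: _).
rewrite -[1]/(1 + 0) iotaDl -map_comp; apply: eq_map => k /=.
by [].
Qed.

Lemma evens_cat s t :
  evens (s ++ t) = evens s ++ (if odd (size s) then odds t else evens t) /\
  odds (s ++ t) = odds s ++ (if odd (size s) then evens t else odds t).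
Proof.
elim: s => [|x s [IH1 IH2]]; first by [].
have -> : odd (size (x :: s)) = ~~ odd (size s) by [].
rewrite cat_cons evensC oddsC evensC oddsC IH1 IH2.
by case: (odd (size s)).
Qed.

Lemma evens_map (f : nat -> nat) s :
  evens (map f s) = map f (evens s) /\ odds (map f s) = map f (odds s).
Proof.
elim: s => [|x s [IH1 IH2]]; first by [].
by rewrite map_cons evensC oddsC evensC oddsC IH1 IH2.
Qed.

Lemma size_eo s : size (evens s) + size (odds s) = size s.
Proof.
elim: s => [|x s IH]; first by [].
by rewrite evensC oddsC /= addnC -IH addnS.
Qed.

Fixpoint inter (e o : seq nat) : seq nat :=
  match e, o with x :: e', y :: o' => x :: y :: inter e' o' | _, _ => e end.

Lemma inter_eo e o : size o <= size e <= (size o).+1 ->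
  evens (inter e o) = e /\ odds (inter e o) = o.
Proof.
elim: e o => [|x e IH] [|y o] H; first by [].
- by [].
- by case: e {IH} H.
- have H' : size o <= size e <= (size o).+1 by [].
  have [H1 H2] := IH o H'.
  have -> : inter (x :: e) (y :: o) = x :: y :: inter e o by [].
  by rewrite evensC !oddsC evensC H1 H2.
Qed.

Lemma sub_count (s s' : seq nat) :
  (forall i, count (pred1 i) s <= count (pred1 i) s') -> exists n, perm_eq (s ++ n) s'.
Proof.
elim: s s' => [|x s IH] s' H; first by exists s'.
have xs' : x \in s'.
  by rewrite -has_pred1 has_count; apply: leq_trans (H x); rewrite /= eqxx.
have P := perm_to_rem xs'.
have [n Hn] : exists n, perm_eq (s ++ n) (rem x s').
  apply: IH => i; have := H i; rewrite ((permP P) (pred1 i)) /=.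
  by rewrite leq_add2l.
exists n; rewrite perm_sym (perm_trans P) //= perm_cons perm_sym //.
Qed.

Lemma strict_inj phi : strict_incr phi -> injective phi.
Proof.
move=> H i j E; case: (ltngtP i j) => // /H; by rewrite E ltnn.
Qed.

Lemma count_map_le phi (s s' : seq nat) : strict_incr phi ->
  (forall i, count (pred1 i) s <= count (pred1 (phi i)) s') ->
  forall j, count (pred1 j) (map phi s) <= count (pred1 j) s'.
Proof.
move=> Hp H j; case: (boolP (j \in map phi s)) => [/mapP [i _ ->]|Hj].
  rewrite count_map; apply: leq_trans (H i); rewrite leq_eqVlt; apply/orP; left.
  apply/eqP; apply: eq_count => k /=; apply/eqP/eqP => [/(@strict_inj _ Hp)|->] //.
have -> : count (pred1 j) (map phi s) = 0.
  by apply/eqP; rewrite eqn0Ngt -has_count has_pred1.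
by [].
Qed.


Arguments eqv_trans {D a b c}. Arguments eqv_sym {D a b}.
Section P3.
Variable D : idomainType.
Notation Y s := (map yv s).
Notation Z s := (map zv s).

Lemma y_front x a : x \in a -> exists a', eqv D (Y a) (Y (x :: a')) /\ perm_eq a (x :: a').
Proof.
elim: a => [|y a IH] //; rewrite inE; case: eqP => [<- _|_ /= /IH [a' [H1 H2]]].
  by exists a; split; [exact: eqv_refl|].
exists (y :: a'); split.
  apply: (@eqv_trans _ _ [:: yv y, yv x & Y a']).
    by have := @eqv_ctx D [:: yv y] [::] _ _ H1; rewrite !cats0 /=; apply.
  by have := @eqv_ctx D [::] (Y a') _ _ (eqv_y D y x); rewrite /=; apply.
by rewrite (perm_trans (_ : perm_eq _ (y :: x :: a'))) ?perm_cons // -[y :: x :: a']/([:: y] ++ [:: x] ++ a') perm_catCA.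
Qed.

Lemma y_perm n : forall a1 a2, size a1 = n -> perm_eq a1 a2 -> eqv D (Y a1) (Y a2).
Proof.
elim: n => [|n IH] [|x a1] a2 //= Hs P.
- by move: P; rewrite perm_sym => /perm_nilP ->; exact: eqv_refl.
- have xa2 : x \in a2 by rewrite -(perm_mem P) mem_head.
  have [a' [H1 H2]] := y_front _ _ xa2.
  have P' : perm_eq a1 a' by rewrite -(perm_cons x) (perm_trans P H2).
  apply: (eqv_trans _ (eqv_sym H1)).
  by have := @eqv_ctx D [:: yv x] [::] _ _ (IH a1 a' (eq_add_S _ _ Hs) P'); rewrite !cats0 /=; apply.
Qed.

Lemma z_front n : forall b x, size b <= n -> x \in evens b ->
  exists b', [/\ eqv D (Z b) (Z (x :: b')), perm_eq (evens b) (evens (x :: b')) &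
                 perm_eq (odds b) (odds (x :: b'))].
Proof.
elim: n => [|n IH] b x; first by case: b.
case: b => [|p [|q b]] Hs; first by [].
- rewrite evensC inE => /eqP ->; exists [::]; split; [exact: eqv_refl|exact: perm_refl|exact: perm_refl].
- rewrite evensC oddsC inE; case: eqP => [<- _|_ Hx].
    by exists (q :: b); split; [exact: eqv_refl|rewrite evensC oddsC; exact: perm_refl|exact: perm_refl].
  have [c [H1 H2 H3]] := IH b x (ltnW Hs) Hx.
  exists (q :: p :: c); split.
  + apply: (@eqv_trans _ _ [:: zv p, zv q, zv x & Z c]).
      by have := @eqv_ctx D [:: zv p; zv q] [::] _ _ H1; rewrite !cats0 /=; apply.
    by have := @eqv_ctx D [::] (Z c) _ _ (eqv_z D p q x); rewrite /=; apply.
  + rewrite !(evensC, oddsC) /=. rewrite evensC in H2.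
    rewrite (perm_trans (_ : perm_eq _ (p :: x :: odds c))) ?perm_cons //.
    by rewrite -[p :: x :: _]/([:: p] ++ [:: x] ++ _) perm_catCA.
  + rewrite !(evensC, oddsC) /= perm_cons. by rewrite oddsC in H3.
Qed.

Lemma z_perm n : forall b1 b2, size b1 = n -> perm_eq (evens b1) (evens b2) ->
  perm_eq (odds b1) (odds b2) -> eqv D (Z b1) (Z b2).
Proof.
elim: n => [|n IH] [|x b1] b2 //= Hs P1 P2.
- have := size_eo b2; rewrite -(perm_size P1) -(perm_size P2) /=.
  by case: b2 {P1 P2} => // _; exact: eqv_refl.
- have xb2 : x \in evens b2 by rewrite -(perm_mem P1) evensC mem_head.
  have [b' [H1 H2 H3]] := z_front _ _ _ (leqnn _) xb2.
  have P1' : perm_eq (odds b1) (odds b').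
    by rewrite -(perm_cons x) -!evensC (perm_trans P1 H2).
  have P2' : perm_eq (evens b1) (evens b').
    by rewrite -(oddsC x) -(oddsC x b') (perm_trans P2 H3).
  apply: (eqv_trans _ (eqv_sym H1)).
  by have := @eqv_ctx D [:: zv x] [::] _ _ (IH b1 b' (eq_add_S _ _ Hs) P2' P1'); rewrite !cats0 /=; apply.
Qed.
End P3.

From mathcomp Require Import zify.
Set Implicit Arguments. Unset Strict Implicit.

Notation Y s := (map yv s).
Notation Z s := (map zv s).

Lemma B1_form w : inB1 w -> w = Y (ys w).
Proof.
case/andP => + _; elim: w => [|[b i] w IH] //=; case: b => //= /IH {1}->.
by [].
Qed.

Lemma B2_form w : inB2 w -> w = Y (ys w) ++ Z (zs w).
Proof. by case/and5P => /eqP. Qed.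

Lemma ys_Y s : ys (Y s) = s.
Proof. by elim: s => // x s IH; rewrite /ys in IH *; rewrite /= IH. Qed.

Lemma inB1_Y s : sorted leq s -> inB1 (Y s).
Proof.
move=> Hs; rewrite /inB1 ys_Y Hs andbT.
by elim: s {Hs} => //= x s ->.
Qed.

Lemma renw_YZ phi a b : renw phi (Y a ++ Z b) = Y (map phi a) ++ Z (map phi b).
Proof. by rewrite /renw map_cat -!map_comp. Qed.

Lemma size_evens s : size (evens s) = uphalf (size s).
Proof. by rewrite /evens size_mkseq. Qed.
Lemma size_odds s : size (odds s) = (size s)./2.
Proof. by rewrite /odds size_mkseq. Qed.

Theorem mainTheorem14 (D : idomainType) (Dinf : infinite_type D) (M M' : word) :
  inB M -> inB M' -> le' M M' ->
  exists (phi : nat -> nat) (N : word) (t : seq nat),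
    [/\ strict_incr phi, inB1 N &
        inI (subp (mulp (mulp (mono D N) (substp (ren D phi) (mono D M)))
                        (mono D [seq zv i | i <- t]))
                  (mono D M'))].
Proof.
move=> _ _ [[B1 [B1' [psi [Hp Hle]]]] | [B2 [B2' [psi [Hp Hle]]]]].
- have EM := B1_form B1; have EM' := B1_form B1'.
  set a := ys M in EM Hle; set a' := ys M' in EM' Hle.
  have [ny Hny] := sub_count _ _ (count_map_le _ _ _ Hp Hle).
  exists psi, (Y (sort leq ny)), [::]; split => //.
    by apply: inB1_Y; apply: sort_sorted; exact: leq_total.
  rewrite substp_mono !mulp_mono -/(eqv D _ _) EM EM' /=.
  have := renw_YZ psi a [::]; rewrite !cats0 => ->.
  rewrite -map_cat; apply: (y_perm _ _ _ _ (erefl _)).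
  by apply: perm_trans Hny; rewrite perm_catC perm_cat2l perm_sort.
- have EM := B2_form B2; have EM' := B2_form B2'.
  set a := ys M in EM Hle; set a' := ys M' in EM' Hle.
  set b := zs M in EM Hle; set b' := zs M' in EM' Hle.
  have L1 i : xi1 M i <= xi1 M' (psi i) by case: (Hle i).
  have L2 i : xi2 M i <= xi2 M' (psi i) by case: (Hle i).
  have L3 i : xi3 M i <= xi3 M' (psi i) by case: (Hle i).
  have [ny Hny] := sub_count _ _ (count_map_le _ _ _ Hp L1).
  have [ne Hne] := sub_count _ _ (count_map_le _ _ _ Hp L2).
  have [no Hno] := sub_count _ _ (count_map_le _ _ _ Hp L3).
  have [Ee Eo] := evens_map psi b.
  rewrite -Ee in Hne; rewrite -Eo in Hno.
  have Se := perm_size Hne; have So := perm_size Hno.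
  rewrite size_cat size_evens size_map in Se.
  rewrite size_cat size_odds size_map in So.
  rewrite size_evens in Se; rewrite size_odds in So.
  exists psi, (Y (sort leq ny)),
    (if odd (size b) then inter no ne else inter ne no); split => //.
    by apply: inB1_Y; apply: sort_sorted; exact: leq_total.
  rewrite substp_mono !mulp_mono -/(eqv D _ _) EM EM' renw_YZ.
  rewrite -!catA catA -!map_cat.
  apply: eqv_cat.
    apply: (y_perm _ _ _ _ (erefl _)).
    by apply: perm_trans Hny; rewrite perm_catC perm_cat2l perm_sort.
  have [E1 E2] := evens_cat (map psi b) (if odd (size b) then inter no ne else inter ne no).
  rewrite size_map in E1 E2.
  move: Se So; rewrite !uphalf_half; case Hb: (odd (size b)) E1 E2 => E1 E2 Se So.
  + have [I1 I2] : evens (inter no ne) = no /\ odds (inter no ne) = ne.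
      apply: inter_eo; move: Se So; case: (odd (size b')) => /= Se So; apply/andP; split; lia.
    apply: (z_perm _ _ _ _ (erefl _)); by rewrite ?E1 ?E2 ?I1 ?I2.
  + have [I1 I2] : evens (inter ne no) = ne /\ odds (inter ne no) = no.
      apply: inter_eo; move: Se So; case: (odd (size b')) => /= Se So; apply/andP; split; lia.
    apply: (z_perm _ _ _ _ (erefl _)); by rewrite ?E1 ?E2 ?I1 ?I2.
Qed.
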